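(* Let $0<q<1/2$, $p=1-q$, $\lambda=q/p$. For each integer $z\ge2$ let $\kappa(z)$ be the unique $\kappa\in(0,+\infty)$ satisfying $$\sum_{j=1}^{z-1}\left(\prod_{i=1}^{j}\left(1-\frac iz\right)\right)\frac{1}{\kappa^j}=\frac{\lambda}{1-\lambda}.$$ Then $$\lim_{z\to+\infty}\kappa(z)=\lambda^{-1}=\frac pq.$$
   Context: The left-hand side is strictly decreasing in $\kappa$ from $+\infty$ to $0$, so $\kappa(z)$ is well defined. $\kappa(z)$ is the unique point where the second derivative in $\kappa$ of the conditional double-spend success probability $P(z,\kappa)=1-Q(z,\kappa zq/p)+(q/p)^ze^{\kappa z(p-q)/p}Q(z,\kappa z)$ changes sign ($Q$ the regularized upper incomplete gamma function). *)

(* Defs.v *)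
From HB Require Import structures.
From mathcomp Require Import all_boot all_order all_algebra.
From mathcomp Require Import all_classical all_reals all_analysis.
Set Implicit Arguments. Unset Strict Implicit. Unset Printing Implicit Defensive.
Import Order.TTheory GRing.Theory Num.Theory.
Local Open Scope ring_scope.

Definition kappaLHS {R : realType} (z : nat) (k : R) : R :=
  \sum_(1 <= j < z) (\prod_(1 <= i < j.+1) (1 - i%:R / z%:R)) / k ^+ j.

(* Main.v *)
Require Import Defs.
From HB Require Import structures.
From mathcomp Require Import all_boot all_order all_algebra.
From mathcomp Require Import all_classical all_reals all_analysis.
From mathcomp Require Import ring lra zify.
Import Order.TTheory GRing.Theory Num.Theory.
Import numFieldNormedType.Exports.
Local Open Scope classical_set_scope.
Local Open Scope ring_scope.

Lemma geo_sum (R : numFieldType) (x : R) n :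
  (1 - x) * \sum_(1 <= j < n.+1) x ^+ j = x - x ^+ n.+1.
Proof.
elim: n => [|n IH]; first by rewrite big_geq // mulr0 expr1 subrr.
rewrite big_nat_recr //= mulrDr IH [x ^+ n.+2]exprS.
set u := x ^+ n.+1; ring.
Qed.

Lemma bern (R : realFieldType) (t : R) n :
  0 <= t <= 1 -> 1 - n%:R * (1 - t) <= t ^+ n.
Proof.
move=> /andP[t0 t1]; elim: n => [|n IH]; first by rewrite mul0r subr0 expr0.
rewrite exprS -natr1.
have n0 : 0 <= n%:R :> R by [].
have h1 : t * (1 - n%:R * (1 - t)) <= t * t ^+ n by rewrite ler_wpM2l.
have h2 : 0 <= n%:R * (1 - t) * (1 - t) by rewrite mulr_ge0 ?mulr_ge0 // subr_ge0.
nra.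
Qed.

Lemma fac01 (R : realFieldType) (z i : nat) : (0 < z)%N -> (i <= z)%N ->
  0 <= (1 - i%:R / z%:R : R) <= 1.
Proof.
move=> z0 iz; have zR : 0 < z%:R :> R by rewrite ltr0n.
have iR : i%:R <= z%:R :> R by rewrite ler_nat.
have : 0 <= i%:R / z%:R :> R by rewrite divr_ge0.
have : i%:R / z%:R <= 1 :> R by rewrite ler_pdivrMr // mul1r.
move=> *; apply/andP; split; lra.
Qed.

Lemma pow_small (R : realType) (y del : R) : 0 < del -> `|y| < 1 -> exists N, `|y ^+ N| < del.
Proof.
move=> d0 ny.
have hy : (fun n => y ^+ n) @ \oo --> (0:R) := cvg_expr ny.
have := proj1 (cvgr0Pnorm_lt (fun n => y ^+ n)) hy del d0.
move=> [N _ HN]. exists N. apply: HN => /=. done.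
Qed.

Theorem mainTheorem12 (R : realType) (q : R) (kappa : nat -> R) :
  0 < q -> q < 1 / 2 ->
  (forall z : nat, (2 <= z)%N ->
     0 < kappa z /\
     kappaLHS z (kappa z) = (q / (1 - q)) / (1 - q / (1 - q))) ->
  kappa @ \oo --> (1 - q) / q.
Proof.
move=> q0 qh Hk.
set lam := q / (1 - q).
set c := lam / (1 - lam).
set L := (1 - q) / q.
have p0 : 0 < 1 - q by lra.
have lam0 : 0 < lam by rewrite divr_gt0.
have lam1 : lam < 1 by rewrite ltr_pdivrMr // mul1r; lra.
have L1 : 1 < L by rewrite ltr_pdivlMr // mul1r; lra.
have LE : L = lam^-1 by rewrite /L /lam invf_div.
have c0 : 0 < c by rewrite divr_gt0 // subr_gt0.
have Pge0 : forall z j, (j < z)%N ->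
    0 <= \prod_(1 <= i < j.+1) (1 - i%:R / z%:R :> R).
  move=> z j jz; rewrite big_nat_cond; apply: prodr_ge0 => i /andP[/andP[i1 ij] _].
  by have /andP[] := fac01 R z i ltac:(lia) ltac:(lia).
have Ple1 : forall z j, (j < z)%N ->
    \prod_(1 <= i < j.+1) (1 - i%:R / z%:R :> R) <= 1.
  move=> z j jz; rewrite big_nat_cond; apply: prodr_ile1 => i /andP[/andP[i1 ij] _].
  by apply: fac01; lia.
have Hup : forall z, (2 <= z)%N -> kappa z <= L.
  move=> z z2; have [k0 kE] := Hk z z2.
  rewrite leNgt; apply/negP => Lk.
  set x := (kappa z)^-1.
  have x0 : 0 < x by rewrite invr_gt0.
  have xl : x < lam by rewrite /x -(invrK lam) -LE ltf_pV2 // posrE; lra.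
  have : kappaLHS z (kappa z) <= \sum_(1 <= j < z) x ^+ j.
    rewrite /kappaLHS; apply: ler_sum_nat => j /andP[j1 jz].
    rewrite /x exprVn -[X in _ <= X]mul1r ler_wpM2r ?invr_ge0 ?exprn_ge0 ?(ltW k0) //.
    exact: Ple1.
  have [n zn] : exists n, z = n.+1 by exists z.-1; lia.
  rewrite kE zn -/lam -/c => hc.
  have := geo_sum R x n.
  have : 0 < x ^+ n.+1 by rewrite exprn_gt0.
  have : (1 - x) * c <= (1 - x) * \sum_(1 <= j < n.+1) x ^+ j by rewrite ler_wpM2l // subr_ge0; lra.
  move: (\sum_(1 <= j < n.+1) x ^+ j) => S.
  have : c * (1 - lam) = lam by rewrite /c divfK // subr_eq0; apply/eqP; lra.
  nra.
apply/cvgrPdist_lt => e e0.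
have [k0 [k1 k2 k3]] : exists k0, [/\ 1 < k0, k0 < L & L - e < k0].
  case: (lerP (L - e/2) ((L+1)/2)) => h; [exists ((L+1)/2) | exists (L - e/2)]; split; lra.
set y := k0^-1.
have y0 : 0 < y by rewrite invr_gt0; lra.
have y1 : y < 1 by rewrite invf_lt1; lra.
have ly : lam < y by rewrite /y -(invrK lam) -LE ltf_pV2 // posrE; lra.
have cE : c * (1 - lam) = lam by rewrite /c divfK // subr_eq0; apply/eqP; lra.
set del := y - c * (1 - y).
have del0 : 0 < del.
  have : c * (1 - y) < c * (1 - lam) by rewrite ltr_pM2l //; lra.
  rewrite /del; lra.
have ny : `|y| < 1 by rewrite ger0_norm // ltW.
have [N hN] := pow_small R y del del0 ny.
rewrite ger0_norm ?exprn_ge0 ?ltW // in hN.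
have hN1 : y ^+ N.+1 < del by rewrite exprS; apply: le_lt_trans hN; rewrite ger_pMl ?exprn_gt0 // ltW.
set SN := \sum_(1 <= j < N.+1) y ^+ j.
have hS := geo_sum R y N.
have SNc : c < SN.
  have : (1 - y) * c < (1 - y) * SN by rewrite -/SN hS; rewrite /del in hN1; lra.
  by rewrite ltr_pM2l // subr_gt0.
set d := SN - c.
have d0 : 0 < d by rewrite /d subr_gt0.
set w := N%:R * N%:R * SN.
have w0 : 0 <= w / d by rewrite divr_ge0 ?mulr_ge0 // ltW // (lt_trans c0).
set M := Num.Def.archi_bound (w / d).
have hM : w / d < M%:R := archi_boundP w0.
exists (maxn (maxn 2 N.+1) M.+1) => // z /= hz.
move: hz; rewrite !geq_max; case/andP; case/andP => z2 Nz Mz.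
have {}Mz : (M <= z)%N by apply: ltnW.
have [kz kE] := Hk z z2.
have ku := Hup z z2.
suff : k0 <= kappa z by move=> h; rewrite ger0_norm; lra.
rewrite leNgt; apply/negP => kl.
have zR : 0 < z%:R :> R by rewrite ltr0n (ltnW z2).
set t : R := 1 - N%:R / z%:R.
have /andP[t0 t1] : 0 <= t <= 1 by apply: fac01; [exact: ltnW z2 | exact: ltnW Nz].
have key : c < kappaLHS z (kappa z).
  rewrite /kappaLHS (big_cat_nat _ (n := N.+1)) //=.
  have rest0 : 0 <= \sum_(N.+1 <= j < z) (\prod_(1 <= i < j.+1) (1 - i%:R / z%:R :> R)) / kappa z ^+ j.
    rewrite big_nat_cond; apply: sumr_ge0 => j /andP[/andP[_ jz] _].
    by rewrite mulr_ge0 ?Pge0 // invr_ge0 exprn_ge0 // ltW.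
  suff : c < \sum_(1 <= j < N.+1) (\prod_(1 <= i < j.+1) (1 - i%:R / z%:R :> R)) / kappa z ^+ j by lra.
  apply: (@lt_le_trans _ _ ((1 - N%:R * (N%:R / z%:R)) * SN)).
    have : w / z%:R < d.
      rewrite ltr_pdivrMr //.
      have : w < M%:R * d by rewrite -ltr_pdivrMr.
      have : M%:R * d <= z%:R * d by rewrite ler_wpM2r ?ler_nat // ltW.
      lra.
    have -> : w / z%:R = N%:R * (N%:R / z%:R) * SN by rewrite /w; ring.
    rewrite /d; lra.
  rewrite /SN mulr_sumr; apply: ler_sum_nat => j /andP[j1 jN].
  have jz : (j < z)%N by apply: leq_trans jN _.
  apply: (@le_trans _ _ ((\prod_(1 <= i < j.+1) (1 - i%:R / z%:R :> R)) * y ^+ j)); last first.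
    have k0p : 0 < k0 by lra.
    have hk : k0^-1 <= (kappa z)^-1 by rewrite lef_pV2 ?posrE // ltW.
    have ip : 0 <= (kappa z)^-1 by rewrite invr_ge0 ltW.
    have ip2 : 0 <= k0^-1 by rewrite invr_ge0 ltW.
    rewrite ler_wpM2l ?Pge0 // /y -!exprVn ler_pXn2r ?nnegrE //.

  have yj : 0 <= y ^+ j by rewrite exprn_ge0 // ltW.
  rewrite ler_wpM2r //.
  have hP : t ^+ j <= \prod_(1 <= i < j.+1) (1 - i%:R / z%:R :> R).
    have := prodr_const_nat 1 j.+1 t; rewrite subSS subn0 => <-.
    rewrite [X in X <= _]big_nat_cond [X in _ <= X]big_nat_cond.
    apply: ler_prod => i /andP[/andP[i1 ij] _]; rewrite t0 /=.
    rewrite /t lerD2l lerN2 ler_wpM2r ?invr_ge0 ?ler0n // ler_nat; exact: leq_trans ij jN.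
  have hb := bern R t j (introT andP (conj t0 t1)).
  have h2 : j%:R * (1 - t) <= N%:R * (1 - t) by rewrite ler_wpM2r ?subr_ge0 // ler_nat.
  have e1 : 1 - t = N%:R / z%:R by rewrite /t opprB addrC subrK.
  apply: le_trans hP; apply: le_trans hb; rewrite e1 lerD2l lerN2 -e1; exact: h2.
move: kE; rewrite -/lam -/c => kE; rewrite kE in key; by rewrite ltxx in key.
Qed.
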